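(* Let $i,j$ be integers with $0\leq j\leq i$. Then $$\sum_{\lambda\in O(i,j)}(-1)^{ol(\lambda)}\,q^{|\lambda|+ol(\lambda)\,(i-\ell(\lambda)+1)}\,q^{(i-\ell(\lambda))(j-\ell(\lambda))}=1,$$ where $O(i,j)$ is the set of overpartitions defined in the context.
   Context: An overpartition with $k$ nonnegative parts is a sequence $\lambda=(\lambda_1,\dots,\lambda_k)$ of integers with $\lambda_1\geq\cdots\geq\lambda_k\geq 0$ in which the first occurrence (leftmost position) of each value may or may not be marked as ''overlined'' (the value $0$ may also be overlined); thus overlined parts have distinct values. Its size is $|\lambda|=\sum_r\lambda_r$, its length $\ell(\lambda)=k$ counts all parts including zeros, and $ol(\lambda)$ is the number of overlined parts. For $0\leq k\leq j$, $O(i,j,k)$ denotes the set of overpartitions $\lambda$ with exactly $k$ nonnegative parts such that (1) every part is at most $j-1$; and (2) when $k\geq 2$, for each $1\leq s\leq k-1$ and each position $r$ with $\lambda_r=j-s$, at least $k-s$ of the parts $\lambda_{r+1},\dots,\lambda_k$ are overlined. (The paper views each overline of an element of $O(i,j,k)$ as carrying weight $w(\lambda)=i-k+1$; this appears as the factor $i-\ell(\lambda)+1$ in the exponent.) $O(i,0,0)$ consists only of the empty partition, and $O(i,j)=\biguplus_{k=0}^{j}O(i,j,k)$. *)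

(* Defs.v *)
From HB Require Import structures.
From mathcomp Require Import all_boot all_order all_algebra.
Set Implicit Arguments. Unset Strict Implicit. Unset Printing Implicit Defensive.
Import Order.TTheory GRing.Theory Num.Theory.

(* An overpartition with k nonnegative parts is encoded as a sequence
   [:: (lambda_1, b_1); ...; (lambda_k, b_k)] of pairs (value, overlined?). *)

Definition op_sorted (s : seq (nat * bool)) : bool :=
  sorted (fun a b : nat => b <= a) (map fst s).

Definition op_first_overlined (s : seq (nat * bool)) : bool :=
  [forall r : 'I_(size s),
     (nth (0, false) s r).2 ==>
     [forall r' : 'I_(size s),
        (r' < r) ==> ((nth (0, false) s r').1 != (nth (0, false) s r).1)]].

Definition is_overpartition (s : seq (nat * bool)) : bool :=
  op_sorted s && op_first_overlined s.

Definition ol (s : seq (nat * bool)) : nat := count snd s.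

Definition op_size (s : seq (nat * bool)) : nat := sumn (map fst s).

(* condition (2) in the definition of O(i,j,k), with k = size s:
   for 1 <= s0 <= k-1 and each position r with lambda_r = j - s0, at least
   k - s0 of the parts after position r are overlined. (Vacuous if k < 2.) *)
Definition op_cond2 (j : nat) (s : seq (nat * bool)) : bool :=
  [forall s0 : 'I_(size s),
     (1 <= s0) ==>
     [forall r : 'I_(size s),
        ((nth (0, false) s r).1 == j - s0) ==>
        (size s - s0 <= count snd (drop r.+1 s))]].

Definition seq_of_tuple (j k : nat) (t : k.-tuple ('I_j * bool)) : seq (nat * bool) :=
  [seq (nat_of_ord p.1, p.2) | p <- t].

(* membership in O(i,j,k) for an overpartition with parts in 'I_j (so every
   part is at most j-1) and exactly k parts.  (The condition does not depend
   on i.) *)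
Definition inO (j k : nat) (t : k.-tuple ('I_j * bool)) : bool :=
  let s := seq_of_tuple t in
  is_overpartition s && op_cond2 j s.

(* Main.v *)
Require Import Defs.
From HB Require Import structures.
From mathcomp Require Import all_boot all_order all_algebra.
From mathcomp Require Import zify ring.
Import GRing.Theory.
Set Implicit Arguments. Unset Strict Implicit.

Definition X j : seq (nat*bool) := [seq (m,b) | m <- iota 0 j, b <- [:: false; true]].
Fixpoint allseqs (k j : nat) : seq (seq (nat*bool)) :=
  if k is k'.+1 then [seq x :: s | x <- X j, s <- allseqs k' j] else [:: [::]].

Lemma mem_X j x : (x \in X j) = (x.1 < j)%N.
Proof.
case: x => m b; apply/allpairsP/idP => [[[m' b'] [/= H1 H2 [-> _]]]|H].
  by move: H1; rewrite mem_iota.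
by exists (m,b) => /=; split => //; [rewrite mem_iota | case: (b)].
Qed.

Lemma mem_allseqs k j s : (s \in allseqs k j) = (size s == k) && all (fun x => x.1 < j)%N s.
Proof.
elim: k s => [|k IH] [|x t] //=.
  by apply/negP => /allpairsP [[? ?] [_ _ ]].
apply/allpairsP/idP => [[[x' t'] [/= H1 H2 [-> ->]]]|/andP[Hs /andP[Hx Ht]]].
  by move: H2; rewrite IH -mem_X H1 eqSS.
by exists (x,t); split => //; rewrite ?mem_X ?IH ?Ht // andbT -eqSS.
Qed.

Lemma size_allseqs k j : size (allseqs k j) = ((j*2)^k)%N.
Proof.
elim: k => [|k IH] //=; by rewrite size_allpairs IH size_allpairs size_iota expnS.
Qed.

Lemma sot_inj j k : injective (@seq_of_tuple j k).
Proof.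
move=> t1 t2 H; apply: val_inj; apply: (inj_map _ H).
by case=> [a b] [c d] /= [/val_inj -> ->].
Qed.

Lemma allseqs_perm j k : perm_eq [seq seq_of_tuple t | t <- index_enum {: k.-tuple ('I_j * bool)}] (allseqs k j).
Proof.
have U : uniq [seq seq_of_tuple t | t <- index_enum {: k.-tuple ('I_j * bool)}].
  by rewrite map_inj_uniq ?index_enum_uniq //; apply: sot_inj.
have Sub : {subset [seq seq_of_tuple t | t <- index_enum {: k.-tuple ('I_j * bool)}] <= allseqs k j}.
  move=> s /mapP [t _ ->]; rewrite mem_allseqs /seq_of_tuple size_map size_tuple eqxx /=.
  by apply/allP => x /mapP [p _ ->] /=.
have Sz : (size (allseqs k j) <= size [seq seq_of_tuple t | t <- index_enum {: k.-tuple ('I_j * bool)}])%N.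
  by rewrite size_map size_allseqs -(filter_predT (index_enum _)) deprecated_filter_index_enum -cardE card_tuple card_prod card_ord card_bool.
have [_ E] := uniq_min_size U Sub Sz.
apply: uniq_perm => //; exact: leq_size_uniq U Sub Sz.
Qed.

Lemma allseqs_uniq k j : uniq (allseqs k j).
Proof.
rewrite -(perm_uniq (allseqs_perm j k)) map_inj_uniq ?index_enum_uniq //; apply: sot_inj.
Qed.

Lemma tuple_to_seqs (R : nmodType) j k (P : pred (seq (nat*bool))) (F : seq (nat*bool) -> R) :
  (\sum_(t : k.-tuple ('I_j * bool) | P (seq_of_tuple t)) F (seq_of_tuple t)
  = \sum_(s <- allseqs k j | P s) F s)%R.
Proof.
rewrite -(big_map (@seq_of_tuple j k) P F); apply: perm_big; exact: allseqs_perm.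
Qed.

Fixpoint allsuf (P : nat*bool -> seq (nat*bool) -> bool) (s : seq (nat*bool)) : bool :=
  if s is x :: t then P x t && allsuf P t else true.

Lemma allsufP P s : allsuf P s = [forall r : 'I_(size s), P (nth (0,false) s r) (drop r.+1 s)].
Proof.
elim: s => [|x t IH] /=; first by apply/esym/forallP => [[]].
apply/andP/forallP => [[Hx Ht] [[|r] Hr]|H].
  by rewrite /= ?drop0.
  move: Ht; rewrite IH => /forallP Ht; exact: (Ht (Ordinal (Hr : (r < size t)%N))).
split; first by move: (H ord0); rewrite /= ?drop0.
rewrite IH; apply/forallP => [[r Hr]]; exact: (H (Ordinal (Hr : (r.+1 < (size t).+1)%N))).
Qed.

Lemma allsufP' (P : nat*bool -> seq (nat*bool) -> bool) s : reflect (forall r, (r < size s)%N -> P (nth (0,false) s r) (drop r.+1 s)) (allsuf P s).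
Proof.
rewrite allsufP; apply: (iffP forallP) => [H r Hr|H r]; [exact: (H (Ordinal Hr)) | exact: H].
Qed.

Definition fo_cond (x : nat*bool) (t : seq (nat*bool)) := all (fun y => y.2 ==> (y.1 != x.1)) t.
Definition c_cond c (x : nat*bool) (t : seq (nat*bool)) := (x.1 <= c + ol t)%N.

Definition goodL c s := [&& op_sorted s, allsuf fo_cond s & allsuf (c_cond c) s].

Lemma fo_equiv s : op_first_overlined s = allsuf fo_cond s.
Proof.
apply/forallP/allsufP' => [H r' Hr'|H r].
  apply/(all_nthP (0,false)) => i; rewrite size_drop nth_drop => Hi.
  apply/implyP => Hb.
  have Hr : (r'.+1 + i < size s)%N by rewrite -ltn_subRL.
  move/implyP: (H (Ordinal Hr)) => /(_ Hb) /forallP /(_ (Ordinal Hr')) /implyP.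
  by rewrite eq_sym; apply; rewrite /= addSn ltnS leq_addr.
apply/implyP => Hb; apply/forallP => r'; apply/implyP => Hlt.
have := H r' (ltn_ord r') => /(all_nthP (0,false)).
have Hi : (r - r'.+1 < size (drop r'.+1 s))%N.
  by rewrite size_drop; apply: ltn_sub2r => //; apply: (leq_ltn_trans Hlt).
move/(_ _ Hi); rewrite nth_drop subnKC // Hb /= eq_sym; exact.
Qed.

Lemma cond2_equiv j s : (size s <= j)%N -> all (fun x => x.1 < j)%N s ->
  op_cond2 j s = allsuf (c_cond (j - size s)) s.
Proof.
move=> Hk /(all_nthP (0,false)) Hv; rewrite /op_cond2.
apply/forallP/allsufP' => [H r Hr|H s0].
  rewrite /c_cond; have Hl := Hv r Hr.
  case: (leqP (nth (0, false) s r).1 (j - size s)) => Hc; first exact: leq_trans Hc (leq_addr _ _).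
  have Hs0 : (j - (nth (0, false) s r).1 < size s)%N.
    by move: Hc Hk Hl; set a := (nth _ _ _).1; set k := size s; lia.
  move: (H (Ordinal Hs0)) => /implyP; rewrite /= subn_gt0 => /(_ Hl) /forallP /(_ (Ordinal Hr)).
  rewrite /= subKn ?(ltnW Hl) // eqxx /=.
  rewrite /ol; move: Hl Hc Hk; set a := (nth _ _ _).1; set o := count _ _; set k := size s; lia.
apply/implyP => H1; apply/forallP => r; apply/implyP => /eqP Heq.
move: (H r (ltn_ord r)); rewrite /c_cond Heq /ol.
move: (ltn_ord s0) H1 Hk; set o := count _ _; set k := size s; lia.
Qed.

Definition goodM c (u : seq (nat*bool)) := op_sorted u && all (fun x => x.1 <= c) u.
Definition hdle (x : nat*bool) (t : seq (nat*bool)) := if t is y :: _ then y.1 <= x.1 else true.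

Lemma op_sorted_cons x t : op_sorted (x :: t) = hdle x t && op_sorted t.
Proof. by case: t. Qed.

Lemma goodL_cons c x t : goodL c (x::t) = [&& hdle x t, fo_cond x t, c_cond c x t & goodL c t].
Proof.
rewrite /goodL op_sorted_cons /=.
by case: (hdle x t); case: (op_sorted t); case: (fo_cond x t); case: (c_cond c x t); case: (allsuf _ t).
Qed.

Lemma goodM_cons c x t : goodM c (x::t) = [&& hdle x t, x.1 <= c & goodM c t].
Proof.
rewrite /goodM op_sorted_cons /=.
by case: (hdle x t); case: (op_sorted t); case: (x.1 <= c); case: (all _ t).
Qed.

Fixpoint psi (u : seq (nat*bool)) : seq (nat*bool) :=
  if u is x :: u' then (x.1 + ol u', x.2) :: psi u' else [::].
Fixpoint phi (s : seq (nat*bool)) : seq (nat*bool) :=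
  if s is x :: t then (x.1 - ol t, x.2) :: phi t else [::].

Lemma ol_cons x t : ol (x :: t) = x.2 + ol t.
Proof. by []. Qed.

Lemma ol_psi u : ol (psi u) = ol u.
Proof. by elim: u => //= x u IH; rewrite /ol /= -/(ol (psi u)) IH. Qed.
Lemma ol_phi u : ol (phi u) = ol u.
Proof. by elim: u => //= x u IH; rewrite /ol /= -/(ol (phi u)) IH. Qed.
Lemma size_psi u : size (psi u) = size u.
Proof. by elim: u => //= x u ->. Qed.
Lemma size_phi u : size (phi u) = size u.
Proof. by elim: u => //= x u ->. Qed.

Lemma phiK : cancel psi phi.
Proof. by elim=> //= [[m b] u IH]; rewrite ol_psi addnK IH. Qed.

Lemma step_le c x y t : goodL c (x::y::t) -> y.1 + y.2 <= x.1.
Proof.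
rewrite goodL_cons => /and4P [H1 H2 _ _].
move: H2; rewrite /fo_cond /= => /andP [Hy _]; move: H1 => /= H1.
move: Hy; case: y.2 => /=; rewrite ?implyTb => Hy.
  by move: Hy H1 => /eqP; set a := y.1; set b := x.1; lia.
by move: H1; set a := y.1; set b := x.1; lia.
Qed.

Lemma olL c x t : goodL c (x::t) -> ol (x::t) <= x.1 + x.2.
Proof.
elim: t x => [|y t IH] x; first by case: x => a []; rewrite /ol /=; lia.
move=> H; have Ht : goodL c (y::t) by move: H; rewrite goodL_cons => /and4P [].
have := IH y Ht; have := step_le H; rewrite [ol (x :: _)]ol_cons.
by set o := ol (y :: t); set a := y.1; set b := x.1; lia.
Qed.

Lemma olL_tail c x t : goodL c (x::t) -> ol t <= x.1.
Proof.
case: t => [|y t] H; first by rewrite /ol.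
move: (H); rewrite goodL_cons => /and4P [_ _ _ Ht]; have := olL Ht; have := step_le H.
by set o := ol (y :: t); set a := y.1; set b := x.1; lia.
Qed.

Lemma goodL_tail c x t : goodL c (x::t) -> goodL c t.
Proof. by rewrite goodL_cons => /and4P []. Qed.

Lemma psiK c s : goodL c s -> psi (phi s) = s.
Proof.
elim: s => //= x t IH H; rewrite ol_phi subnK ?(olL_tail H) // IH ?(goodL_tail H) //.
by case: x {H}.
Qed.

Lemma phi_good c s : goodL c s -> goodM c (phi s).
Proof.
elim: s => //= x t IH H; rewrite goodM_cons IH ?(goodL_tail H) // andbT.
move: (H); rewrite goodL_cons => /and4P [_ _ Hc _]; move: Hc; rewrite /c_cond => Hc.
apply/andP; split; last by rewrite /=; set o := ol t; set a := x.1; lia.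
case: t H IH Hc => [|y t] H _ Hc //=.
have := step_le H.
by set o := ol t; set a := x.1; set b := y.1; lia.
Qed.

Lemma sorted_all x u : op_sorted (x :: u) -> all (fun y => y.1 <= x.1) u.
Proof.
rewrite /op_sorted /= path_sortedE; last by move=> a b d /= H1 H2; apply: leq_trans H2 H1.
by rewrite all_map => /andP [].
Qed.

Lemma psi_bound m u : all (fun x => x.1 <= m) u -> op_sorted u ->
  all (fun y : nat*bool => y.1 + y.2 <= m + ol u) (psi u).
Proof.
elim: u m => //= x u IH m /andP [Hx Hu] Hs.
apply/andP; split.
  by rewrite /=; set o := ol u; set a := x.1; move: Hx; lia.
have Hs' : op_sorted u by move: Hs; rewrite op_sorted_cons => /andP [].
apply: sub_all (IH _ (sorted_all Hs) Hs') => y /=.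
by move: Hx; set o := ol u; set a := x.1; lia.
Qed.

Lemma psi_good c u : goodM c u -> goodL c (psi u).
Proof.
elim: u => //= x u IH; rewrite goodM_cons => /and3P [Hh Hx Hu].
rewrite goodL_cons IH // andbT.
have Hs : op_sorted (x :: u) by move: Hu Hh; rewrite /goodM op_sorted_cons => /andP [-> _] ->.
apply/and3P; split.
- case: u Hh {IH Hu Hs} => [|y u] //= Hh.
  by move: Hh; rewrite /=; set o := ol u; set a := x.1; lia.
- rewrite /fo_cond /=; apply: sub_all (psi_bound (sorted_all Hs) (proj1 (andP Hu))) => y /=.
  by case: y.2 => /=; set o := ol u; set a := x.1; lia.
- by rewrite /c_cond /= ol_psi; move: Hx; set o := ol u; set a := x.1; lia.
Qed.

Lemma psi_lt c u : all (fun x => x.1 <= c) u -> all (fun y => y.1 < c + size u) (psi u).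
Proof.
elim: u => //= x u IH /andP [Hx Hu]; apply/andP; split.
  by rewrite /=; have := count_size snd u; rewrite -/(ol u); move: Hx; set o := ol u; set a := x.1; lia.
by apply: sub_all (IH Hu) => y /=; lia.
Qed.

Lemma lam_to_mu (R : nmodType) (F : seq (nat*bool) -> R) k j c : (c + k <= j)%N ->
  (\sum_(s <- allseqs k j | goodL c s) F s = \sum_(u <- allseqs k j | goodM c u) F (psi u))%R.
Proof.
move=> Hj; rewrite -big_filter -[RHS]big_filter -(big_map psi predT F); apply: perm_big.
apply: uniq_perm.
- exact: filter_uniq (allseqs_uniq k j).
- rewrite map_inj_uniq ?(filter_uniq _ (allseqs_uniq k j)) //; exact: can_inj phiK.
move=> s; rewrite mem_filter mem_allseqs; apply/idP/mapP.
  move=> /and3P [Hg /eqP Hs Hv]; exists (phi s); last by rewrite (psiK Hg).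
  rewrite mem_filter mem_allseqs phi_good //= size_phi Hs eqxx /=.
  elim: s {Hs Hg} Hv => //= x t IH /andP [Hx Ht]; rewrite IH // andbT.
  by move: Hx; set o := ol t; set a := x.1; lia.
move=> [u]; rewrite mem_filter mem_allseqs => /and3P [Hg /eqP Hs _] ->.
rewrite psi_good //= size_psi Hs eqxx /=.
apply: sub_all (psi_lt (proj2 (andP Hg))) => x /=; rewrite Hs; move: Hj; lia.
Qed.

Fixpoint Qp (R : comNzRingType) (q : R) (k c : nat) : R :=
  if k is k'.+1 then (\sum_(m < c.+1) q ^+ m * Qp q k' m)%R else 1%R.

Lemma QpS (R : comNzRingType) (q : R) k c : Qp q k.+1 c = (\sum_(m < c.+1) q ^+ m * Qp q k m)%R.
Proof. by []. Qed.
Lemma Qp0k (R : comNzRingType) (q : R) c : Qp q 0 c = 1%R.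
Proof. by []. Qed.
Arguments Qp : simpl never.

Definition Ap (R : comNzRingType) (q : R) (i k : nat) : R :=
  (\prod_(t < k) (1 - q ^+ (i - k + 1) * q ^+ t))%R.

Local Open Scope ring_scope.

Lemma Qp0 (R : comNzRingType) (q : R) k : Qp q k 0 = 1.
Proof. by elim: k => // k IH; rewrite QpS big_ord1 IH expr0 mulr1. Qed.

Lemma Qp_pascal (R : comNzRingType) (q : R) k a :
  Qp q k.+1 a.+1 = Qp q k a.+1 + q ^+ k.+1 * Qp q k.+1 a.
Proof.
elim: k a => [|k IH] a.
  rewrite QpS big_ord_recl expr0 mul1r; congr (_ + _).
  rewrite QpS big_distrr; apply: eq_bigr => m _ /=.
  by rewrite /bump /= add1n !Qp0k !mulr1 exprS expr1.
rewrite [Qp q k.+2 a.+1]QpS big_ord_recl /= expr0 mul1r Qp0.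
under eq_bigr => m _ do rewrite /bump /= add1n IH mulrDr.
rewrite big_split /= addrA; congr (_ + _).
  by rewrite [Qp q k.+1 a.+1]QpS [in RHS]big_ord_recl /= expr0 mul1r Qp0.
rewrite [Qp q k.+2 a]QpS big_distrr; apply: eq_bigr => m _ /=.
by rewrite !exprS; ring.
Qed.

Lemma Ap_rec (R : comNzRingType) (q : R) i k : (k <= i)%N ->
  Ap q i.+1 k.+1 = (1 - q ^+ i.+1) * Ap q i k.
Proof.
move=> Hk; rewrite /Ap big_ord_recr /= mulrC; congr (_ * _).
  by rewrite -exprD; congr (1 - q ^+ _); lia.
Qed.

Definition Tp (R : comNzRingType) (q : R) (i j : nat) : R :=
  \sum_(k < j.+1) Ap q i k * Qp q k (j - k) * q ^+ ((i - k) * (j - k)).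

Lemma Tp1 (R : comNzRingType) (q : R) j i : (j <= i)%N -> Tp q i j = 1.
Proof.
elim: j i => [|j IH] i Hj.
  by rewrite /Tp big_ord1 /Ap big_ord0 /= !mul1r muln0.
case: i Hj => [//|i] Hj.
have E : Tp q i.+1 j.+1 = q ^+ i.+1 * Tp q i.+1 j + (1 - q ^+ i.+1) * Tp q i j.
  rewrite /Tp big_ord_recl [in RHS]big_ord_recl mulrDr -addrA.
  congr (_ + _).
    by rewrite /Ap !big_ord0 /= !mul1r -exprD; congr (_ ^+ _); lia.
  rewrite big_distrr /=.
  under eq_bigr => k _ do rewrite /bump /= add1n.
  have Hs : forall k : 'I_j.+1, Qp q k.+1 (j.+1 - k.+1) =
     Qp q k (j - k) + (if (k < j)%N then q ^+ k.+1 * Qp q k.+1 (j - k).-1 else 0).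
    move=> [k Hk] /=; rewrite subSS; case: ltnP => Hkj.
      by rewrite -(prednK (_ : (0 < j - k)%N)) ?Qp_pascal ?prednK ?subn_gt0.
    have -> : (j - k = 0)%N by lia.
    by rewrite !Qp0 addr0.
  under eq_bigr => k _ do rewrite Hs mulrDr mulrDl.
  rewrite big_split /= addrC; congr (_ + _).
    rewrite big_ord_recr /= ltnn mulr0 mul0r addr0.
    apply: eq_bigr => [[k Hk]] _ /=; rewrite /bump /= add1n Hk (_ : ((j - k).-1 = j - k.+1)%N); last by lia.
    set A := Ap _ _ _; set Qv := Qp _ _ _.
    transitivity (A * Qv * q ^+ (k.+1 + (i.+1 - k.+1) * (j.+1 - k.+1))); first by rewrite exprD; ring.
    rewrite (_ : (k.+1 + (i.+1 - k.+1) * (j.+1 - k.+1) = i.+1 + (i.+1 - k.+1) * (j - k.+1))%N); last by nia.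
    by rewrite exprD; ring.
  rewrite big_distrr /=; apply: eq_bigr => [[k Hk]] _ /=; rewrite Ap_rec; last by lia.
  by rewrite !subSS; ring.
rewrite E (IH i.+1) ?(IH i); try lia.
by rewrite !mulr1 addrC subrK.
Qed.

Fixpoint W (R : comNzRingType) (q z : R) (u : seq (nat*bool)) : R :=
  if u is x :: u' then (if x.2 then - z else 1) * q ^+ x.1 * W q (z * q) u' else 1.

Lemma op_size_cons x t : op_size (x :: t) = (x.1 + op_size t)%N.
Proof. by []. Qed.

Lemma weight_psi (R : comNzRingType) (q : R) u a :
  (-1) ^+ ol (psi u) * q ^+ (op_size (psi u) + ol (psi u) * a) = W q (q ^+ a) u.
Proof.
elim: u a => [|x u IH] a; first by rewrite /= mulr1.
rewrite /= -exprSr -(IH a.+1) !ol_psi op_size_cons.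
case: x => m b /=; set o := ol u; set S := op_size (psi u).
rewrite (_ : (m + o + S + (b + o) * a = (b * a) + (m + (S + o * a.+1)))%N); last by nia.
rewrite !exprD; case: b => /=; rewrite ?expr1 ?expr0 ?mul1n ?muln0; ring.
Qed.

Lemma goodM_cons2 c x u : goodM c (x::u) = (x.1 <= c)%N && goodM x.1 u.
Proof.
rewrite /goodM op_sorted_cons /=.
case Hs: (op_sorted u) => /=; last by rewrite !andbF.
case Hh: (hdle x u) => /=.
- case Hx: (x.1 <= c)%N => //=.
  have Ha : all (fun y : nat * bool => (y.1 <= x.1)%N) u by apply: sorted_all; rewrite op_sorted_cons Hh Hs.
  rewrite Ha; apply: sub_all Ha => y /= Hy; exact: leq_trans Hy Hx.
- case: u Hh Hs => //= y u -> _; by rewrite andbF.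
Qed.

Lemma allseqsS k j : allseqs k.+1 j = [seq x :: s | x <- X j, s <- allseqs k j].
Proof. by []. Qed.

Lemma Dsum (R : comNzRingType) (q z : R) k j c : (c + k <= j)%N ->
  \sum_(u <- allseqs k j | goodM c u) W q z u = (\prod_(t < k) (1 - z * q ^+ t)) * Qp q k c.
Proof.
elim: k c z => [|k IH] c z Hj.
  by rewrite /= big_cons big_nil /goodM /= addr0 big_ord0 mul1r.
rewrite allseqsS big_mkcond big_allpairs_dep /=.
transitivity (\sum_(x <- X j) (if (x.1 <= c)%N then (if x.2 then -z else 1) * q ^+ x.1 *
   ((\prod_(t < k) (1 - z * q * q ^+ t)) * Qp q k x.1) else 0)).
  apply: eq_bigr => x _; case: (leqP x.1 c) => H.
    rewrite -IH; last by lia.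
    rewrite big_distrr (big_mkcond (fun u => goodM x.1 u)); apply: eq_bigr => u _; rewrite goodM_cons2 H /=.
    by case: (goodM x.1 u); rewrite ?mulr0.
  by rewrite big1 // => u _; rewrite goodM_cons2 leqNgt H.
rewrite /X big_allpairs /=.
transitivity (\sum_(m <- iota 0 j) if (m <= c)%N then (1 - z) * (\prod_(t < k) (1 - z * q * q ^+ t)) * (q ^+ m * Qp q k m) else 0).
  apply: eq_bigr => m _; rewrite big_cons big_cons big_nil /=.
  by case: (m <= c)%N; rewrite ?addr0 //; ring.
rewrite -big_mkcond /= -big_distrr /=.
rewrite (_ : iota 0 j = index_iota 0 j); last by rewrite /index_iota subn0.
rewrite big_mkord QpS (big_ord_widen j (fun m => q ^+ m * Qp q k m)); last by lia.
rewrite big_ord_recl expr0 mulr1 -!mulrA; congr (_ * (_ * _)).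
  by apply: eq_bigr => t _; rewrite /= exprS mulrA.
Qed.

Unset Implicit Arguments.

Theorem theorem3p1 (R : comNzRingType) (q : R) (i j : nat) (hji : (j <= i)%N) :
  \sum_(k < j.+1)
    \sum_(t : k.-tuple ('I_j * bool) | inO t)
      (-1) ^+ ol (seq_of_tuple t)
      * q ^+ (op_size (seq_of_tuple t) + ol (seq_of_tuple t) * (i - k + 1))%N
      * q ^+ ((i - k) * (j - k))%N
  = 1.
Proof.
transitivity (Tp q i j); last exact: Tp1.
rewrite /Tp; apply: eq_bigr => [[k Hk]] _ /=.
rewrite -big_distrl /=; congr (_ * _).
pose P := fun s => is_overpartition s && op_cond2 j s.
pose F := fun s => (-1) ^+ ol s * q ^+ (op_size s + ol s * (i - k + 1))%N.
transitivity (\sum_(t : k.-tuple ('I_j * bool) | P (seq_of_tuple t)) F (seq_of_tuple t)); first reflexivity.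
rewrite tuple_to_seqs.
transitivity (\sum_(s <- allseqs k j | goodL (j - k) s) F s).
  rewrite big_seq_cond [RHS]big_seq_cond; apply: eq_bigl => s.
  case Hs: (s \in allseqs k j) => //=; move: Hs; rewrite mem_allseqs => /andP [/eqP Hsz Hv].
  rewrite /P /is_overpartition fo_equiv cond2_equiv ?Hsz //.
  by rewrite /goodL andbA.
rewrite lam_to_mu; last by lia.
rewrite (eq_bigr (fun u => W q (q ^+ (i - k + 1)) u)); last by move=> u _; exact: weight_psi.
by rewrite Dsum; last by lia.
Qed.
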